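(* Let $c>0$. There is a constant $\delta=\delta(c)>0$ such that the following holds. Let $p\ge 2$ and let $\mathcal{F}$ be a finite family of $n\ge 1$ nonempty subsets of $\mathbb{R}^d$ whose dual hypergraph has a hereditarily $c$-linear Delaunay graph and which satisfies the $(p,2)$-property. Then there is a point $x\in\mathbb{R}^d$ contained in at least $\delta\, n/p$ members of $\mathcal{F}$.
   Context: A hypergraph $H=(V,\mathcal{E})$ consists of a finite vertex set $V$ and a collection $\mathcal{E}$ of subsets of $V$. For $S\subseteq V$, $H|_S=(S,\{e\cap S: e\in\mathcal{E}\})$. The Delaunay graph of $H$ is the graph on $V$ whose edges are the hyperedges of size exactly $2$. $H$ has a hereditarily $c$-linear Delaunay graph if for every nonempty $S\subseteq V$ the Delaunay graph of $H|_S$ has fewer than $c|S|$ edges. The dual hypergraph of a family $\mathcal{F}$ of subsets of $\mathbb{R}^d$ has vertex set $\mathcal{F}$ and, for each $x\in\mathbb{R}^d$, the hyperedge $e_x=\{B\in\mathcal{F}: x\in B\}$. $\mathcal{F}$ satisfies the $(p,2)$-property if among any $p$ members of $\mathcal{F}$ some two have nonempty intersection. *)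

(* Defs.v *)
From HB Require Import structures.
From mathcomp Require Import all_boot all_order all_algebra.
From mathcomp Require Import boolp classical_sets reals.
Set Implicit Arguments. Unset Strict Implicit. Unset Printing Implicit Defensive.
Import Order.TTheory GRing.Theory Num.Theory.
Local Open Scope ring_scope.
Local Open Scope classical_set_scope.

(* A family F of n subsets of R^d is an indexed family B : 'I_n -> set 'rV[R]_d;
   the vertex set of its dual hypergraph is 'I_n. *)

Definition dual_edge (R : realType) (d n : nat) (B : 'I_n -> set 'rV[R]_d)
  (x : 'rV[R]_d) : {set 'I_n} := [set i | x \in B i].

Definition delaunay_edges (R : realType) (d n : nat) (B : 'I_n -> set 'rV[R]_d)
  (S : {set 'I_n}) : {set {set 'I_n}} :=
  [set e : {set 'I_n} | (#|e| == 2)%N && `[< exists x, dual_edge B x :&: S = e >]].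

Definition hered_linear_delaunay (R : realType) (d n : nat) (c : R)
  (B : 'I_n -> set 'rV[R]_d) : Prop :=
  forall S : {set 'I_n}, S != finset.set0 ->
    (#|delaunay_edges B S|%:R < c * #|S|%:R)%R.

Definition p2_property (R : realType) (d n : nat) (p : nat)
  (B : 'I_n -> set 'rV[R]_d) : Prop :=
  forall T : {set 'I_n}, #|T| = p ->
    exists i j, [/\ i \in T, j \in T, i != j & B i `&` B j !=set0].

(* Main.v *)
Require Import Defs.
From HB Require Import structures.
From mathcomp Require Import all_boot all_order all_algebra.
From mathcomp Require Import boolp classical_sets reals.
From mathcomp Require Import ring lra zify.
Set Implicit Arguments. Unset Strict Implicit. Unset Printing Implicit Defensive.
Import Order.TTheory GRing.Theory Num.Theory.
Local Open Scope ring_scope.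
Local Notation inE := finset.inE.

Section W.
Variables (R : realType) (n : nat).

Definition wt (q : R) (f : {ffun 'I_n -> bool}) : R :=
  \prod_i (if f i then q else 1 - q).
Definition Sf (f : {ffun 'I_n -> bool}) : {set 'I_n} := [set i | f i].

Lemma ind_prod (P : 'I_n -> bool) :
  ([forall i, P i])%:R = \prod_i (P i)%:R :> R.
Proof.
case: (boolP [forall i, P i]) => [/forallP H|/forallPn [i Hi]].
  by rewrite big1 // => i _; rewrite H.
by rewrite (bigD1 i) //= (negbTE Hi) mul0r.
Qed.

Lemma Wlem (q : R) (A C : {set 'I_n}) : [disjoint A & C] ->
  \sum_f wt q f * ((A \subset Sf f) && [disjoint Sf f & C])%:R
  = q ^+ #|A| * (1 - q) ^+ #|C|.
Proof.
move=> dAC.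
pose g (i : 'I_n) (b : bool) : R :=
  if b then (if i \in C then 0 else q) else (if i \in A then 0 else 1 - q).
have E : forall f, wt q f * ((A \subset Sf f) && [disjoint Sf f & C])%:R
   = \prod_i g i (f i).
  move=> f.
  have -> : (A \subset Sf f) && [disjoint Sf f & C] =
     [forall i, ((i \in A) ==> f i) && ((i \in C) ==> ~~ f i)].
    apply/andP/forallP => [[/fintype.subsetP H1 H2] i|H].
      apply/andP; split; apply/implyP => Hi.
        by move: (H1 _ Hi); rewrite inE.
      by move: (disjointFl H2 Hi); rewrite inE => ->.
    split; first by apply/fintype.subsetP => i Hi; rewrite inE; move: (H i) => /andP[/implyP /(_ Hi) ->].
    apply/pred0P => i /=; rewrite inE; have /andP[_ /implyP] := H i.
    by case: (f i) => //=; case: (i \in C) => //; move=> /(_ isT).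
  rewrite ind_prod /wt -big_split /=; apply: eq_bigr => i _.
  rewrite /g; case: (f i); case iA: (i \in A); case iC: (i \in C) => /=;
    rewrite ?mulr1 ?mulr0 //.
under eq_bigr do rewrite E.
rewrite -(bigA_distr_bigA (fun i b => g i b)) /=.
under eq_bigr do rewrite big_bool.
rewrite (bigID (fun i => i \in A)) /=.
rewrite (eq_bigr (fun _ => q)); last first.
  move=> i iA; rewrite /g iA addr0; case iC: (i \in C) => //.
  by move: (disjointFr dAC iA); rewrite iC.
rewrite prodr_const; congr (_ * _).
rewrite (bigID (fun i => i \in C)) /=.
rewrite (eq_bigr (fun _ => 1 - q)); last by move=> i /andP[/negbTE -> ->]; rewrite /g add0r.
rewrite [X in _ * X]big1 ?mulr1; last first.
  by move=> i /andP[/negbTE -> /negbTE ->]; rewrite /g subrKC.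
rewrite prodr_const; congr (_ ^+ _); apply: eq_card => i.
rewrite unfold_in /=.
by case iC: (i \in C); rewrite ?andbF ?andbT // (disjointFl dAC iC).
Qed.


Lemma disj0 (S : {set 'I_n}) : [disjoint S & finset.set0].
Proof. by apply/pred0P => x /=; rewrite finset.in_set0 andbF. Qed.

Lemma Wsum (q : R) (I : finType) (P : pred I) (A C : I -> {set 'I_n}) :
  (forall j, P j -> [disjoint A j & C j]) ->
  \sum_f wt q f * \sum_(j | P j) ((A j \subset Sf f) && [disjoint Sf f & C j])%:R
  = \sum_(j | P j) q ^+ #|A j| * (1 - q) ^+ #|C j|.
Proof.
move=> H; under eq_bigr do rewrite mulr_sumr.
rewrite exchange_big; apply: eq_bigr => j Pj; exact: Wlem (H j Pj).
Qed.

Lemma card_sum (I : finType) (P : pred I) (b : I -> bool) :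
  \sum_(j | P j) (b j)%:R = #|[pred j | P j && b j]|%:R :> R.
Proof.
rewrite (eq_bigr (fun j => if b j then 1 else 0)); last by move=> j _; case: (b j).
by rewrite -big_mkcondr /= sumr_const.
Qed.

Lemma wt_ge0 q f : 0 <= q <= 1 -> 0 <= wt q f.
Proof.
move=> /andP[q0 q1]; apply: prodr_ge0 => i _; case: (f i) => //.
by rewrite subr_ge0.
Qed.

Lemma sum_wt q : \sum_f wt q f = 1.
Proof.
have := Wlem q (disj0 finset.set0); rewrite cards0 !expr0 mulr1 => <-.
by apply: eq_bigr => f _; rewrite finset.sub0set disj0 mulr1.
Qed.

Lemma sum_wt_card q : \sum_f wt q f * #|Sf f|%:R = q * n%:R.
Proof.
have := Wsum q (P := predT) (A := fun i => [set i]%SET) (C := fun _ => finset.set0)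
  (fun j _ => disj0 _).
have -> : \sum_(j : 'I_n) q ^+ #|[set j]%SET| * (1 - q) ^+ #|@finset.set0 'I_n|
   = q * n%:R.
  rewrite (eq_bigr (fun _ => q)); last by move=> j _; rewrite finset.cards1 cards0 expr1 expr0 mulr1.
  by rewrite sumr_const card_ord mulr_natr.
move=> <-; apply: eq_bigr => f _; congr (_ * _).
rewrite card_sum; congr (_%:R); apply: eq_card => i.
by rewrite [in RHS]unfold_in /= finset.sub1set disj0 andbT.
Qed.

Lemma bern (q : R) (m : nat) : 0 <= q <= 1 -> 1 - m%:R * q <= (1 - q) ^+ m.
Proof.
move=> /andP[q0 q1]; elim: m => [|m IH]; first by rewrite mul0r subr0 expr0.
rewrite exprS -natr1.
have h1 : 0 <= 1 - q by rewrite subr_ge0.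
have : (1 - q) * (1 - m%:R * q) <= (1 - q) * (1 - q) ^+ m by rewrite ler_wpM2l.
apply: le_trans.
have hm : 0 <= m%:R :> R by [].
nra.
Qed.

End W.

Section G.
Variables (R : realType) (d n : nat) (B : 'I_n -> set 'rV[R]_d).

Definition Ge : {set {set 'I_n}} :=
  [set e : {set 'I_n} | (#|e| == 2)%N && `[< exists x, e \subset dual_edge B x >]].
Definition ES (S : {set 'I_n}) : {set {set 'I_n}} := [set e in Ge | e \subset S].

Lemma sub_card (T : {set 'I_n}) k : (k <= #|T|)%N ->
  exists T' : {set 'I_n}, T' \subset T /\ #|T'| = k.
Proof.
elim: k => [|k IH] Hk; first by exists finset.set0; split; [apply: finset.sub0set | apply: cards0].
have [T' [sT cT]] := IH (ltnW Hk).
have : T' \proper T by rewrite properEcard sT cT.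
case/properP => _ [x xT xT'].
exists (x |: T'); split; last by rewrite cardsU1 xT' cT.
by rewrite finset.subUset finset.sub1set xT sT.
Qed.

Lemma indep_exists (S : {set 'I_n}) : exists T : {set 'I_n}, [/\ T \subset S,
  (forall e, e \in Ge -> ~~ (e \subset T)) & (#|S| <= #|ES S| + #|T|)%N].
Proof.
have : forall k (S : {set 'I_n}), (#|S| <= k)%N -> exists T : {set 'I_n}, [/\ T \subset S,
  (forall e, e \in Ge -> ~~ (e \subset T)) & (#|S| <= #|ES S| + #|T|)%N].
  elim=> [|k IH] S0 HS.
    exists finset.set0; split; first exact: finset.sub0set.
      move=> e /[!inE] /andP[/eqP ce _]; apply/negP; rewrite finset.subset0 => /eqP e0.
      by rewrite e0 cards0 in ce.
    by move: HS; rewrite leqn0 => /eqP ->.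
  case: (set_0Vmem S0) => [->|[v vS]].
    exists finset.set0; split; first exact: finset.sub0set.
      move=> e /[!inE] /andP[/eqP ce _]; apply/negP; rewrite finset.subset0 => /eqP e0.
      by rewrite e0 cards0 in ce.
    by rewrite cards0.
  have cS : #|S0| = (#|S0 :\ v|).+1 by rewrite (cardsD1 v) vS.
  have hS' : (#|S0 :\ v| <= k)%N by rewrite -ltnS -cS.
  have [T' [sT' iT' cT']] := IH (S0 :\ v) hS'.
  have ESsub : ES (S0 :\ v) \subset ES S0.
    apply/fintype.subsetP => e; rewrite !inE => /andP[eG es]; rewrite eG /=.
    exact: fintype.subset_trans es (finset.subD1set _ _).
  case: (pselect (exists u, u \in S0 :\ v /\ [set u; v]%SET \in Ge)).
    move=> [u [uS ue]]; exists T'; split => //.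
      by apply: fintype.subset_trans sT' (finset.subD1set _ _).
    have : ES (S0 :\ v) \proper ES S0.
      apply/properP; split => //; exists [set u; v]%SET.
        rewrite inE ue /= finset.subUset !finset.sub1set vS.
        by move: uS; rewrite inE => /andP[_ ->].
      rewrite inE negb_and; apply/orP; right; apply/negP => /fintype.subsetP /(_ v).
      by rewrite !inE eqxx orbT => /(_ isT).
    move/proper_card => lt.
    rewrite cS; lia.
  move=> Hno; exists (v |: T'); split.
  - by rewrite finset.subUset finset.sub1set vS (fintype.subset_trans sT' (finset.subD1set _ _)).
  - move=> e eG; apply/negP => se.
    case: (boolP (v \in e)) => ve; last first.
      have : e \subset T'.
        apply/fintype.subsetP => x xe; move/fintype.subsetP: se => /(_ x xe).
        rewrite !inE => /orP[/eqP xv|//]; by move: ve; rewrite -xv xe.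
      by apply/negP; apply: iT'.
    have : #|e :\ v| == 1%N.
      move: eG; rewrite inE (cardsD1 v) ve => /andP[/eqP h _]; apply/eqP; move: h; rewrite add1n; by case=> ->.
    move/finset.cards1P => [u eu].
    have ue : u \in e :\ v by rewrite eu finset.set11.
    move: (ue); rewrite inE => /andP[uv uev].
    apply: Hno; exists u; split.
      apply: (fintype.subsetP sT').
      by move/fintype.subsetP: se => /(_ u uev); rewrite finset.in_setU (negbTE uv).
    suff -> : [set u; v]%SET = e by [].
    by rewrite -(finset.setD1K ve) eu finset.setUC.
  - have vT' : v \notin T'.
      apply/negP => /(fintype.subsetP sT'); by rewrite finset.in_setD1 eqxx.
    rewrite cardsU1 vT' cS addnS ltnS.
    by apply: leq_trans cT' _; rewrite leq_add2r subset_leq_card.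
by move=> H; apply: H (leqnn _).
Qed.

Lemma lin (p : nat) : p2_property p B -> forall S : {set 'I_n},
  (#|S| <= #|ES S| + p.-1)%N.
Proof.
move=> Hp S; have [T [_ iT cT]] := indep_exists S.
suff : (#|T| < p)%N by move=> h; apply: leq_trans cT _; rewrite leq_add2l -ltnS; case: p h Hp.
rewrite ltnNge; apply/negP => /sub_card [T' [sT' cT']].
have [i [j [iT0 jT0 ij [x [xi xj]]]]] := Hp T' cT'.
have eG : [set i; j]%SET \in Ge.
  rewrite inE finset.cards2 ij /=; apply/asboolP; exists x.
  by rewrite finset.subUset !finset.sub1set !inE; apply/andP; split; apply: mem_set.
apply: (negP (iT _ eG)).
by rewrite finset.subUset !finset.sub1set (fintype.subsetP sT' _ iT0) (fintype.subsetP sT' _ jT0).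
Qed.

Lemma ES_sum (S : {set 'I_n}) :
  #|ES S|%:R = \sum_(e in Ge) ((e \subset S) && [disjoint S & finset.set0])%:R :> R.
Proof.
rewrite card_sum; congr (_%:R); apply: eq_card => e.
by rewrite [in RHS]unfold_in /= disj0 andbT inE.
Qed.

Lemma del_lower (X : {set 'I_n} -> 'rV[R]_d) (S : {set 'I_n}) :
  (forall e, e \in Ge -> e \subset dual_edge B (X e)) ->
  \sum_(e in Ge) ((e \subset S) && [disjoint S & dual_edge B (X e) :\: e])%:R
  <= #|delaunay_edges B S|%:R :> R.
Proof.
move=> HX; rewrite card_sum ler_nat; apply: subset_leq_card.
apply/fintype.subsetP => e; rewrite unfold_in /= => /andP[eG /andP[eS dS]].
rewrite inE; move: (eG); rewrite inE => /andP[-> _] /=.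
apply/asboolP; exists (X e); apply/setP => i; rewrite finset.in_setI.
apply/andP/idP => [[iD iS]|ie].
  apply/negPn/negP => nie; move: (disjointFl dS (x := i)).
  by rewrite finset.in_setD nie iD iS => /(_ isT).
by rewrite (fintype.subsetP (HX e eG) _ ie) (fintype.subsetP eS _ ie).
Qed.

Lemma del_upper (c : R) : 0 <= c -> hered_linear_delaunay c B ->
  forall S : {set 'I_n}, #|delaunay_edges B S|%:R <= c * #|S|%:R.
Proof.
move=> c0 H S; case: (eqVneq S finset.set0) => [->|Sn]; last exact: ltW (H S Sn).
suff -> : delaunay_edges B finset.set0 = finset.set0 by rewrite !cards0 /=; lra.
apply/setP => e.
rewrite finset.in_set0 inE; apply/negP => /andP[/eqP ce /asboolP [x ex]].
by move: ce; rewrite -ex finset.setI0 cards0.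
Qed.

End G.

Lemma final_arith (R : realType) (c δ N P G t : R) : 0 < c -> δ = (2 + 32 * c)^-1 ->
  0 < N -> 2 <= P -> t * P = δ * N -> N ^+ 2 <= 4 * (P - 1) * G ->
  G <= 4 * c * N * t -> False.
Proof.
move=> c0 dE N0 P2 tP h1 h2.
have d0 : 0 < δ by rewrite dE invr_gt0; lra.
have dd : δ * (2 + 32 * c) = 1 by rewrite dE mulVf //; lra.
have t0 : 0 < t.
  have : 0 < t * P by rewrite tP; apply: mulr_gt0.
  nra.
have h3 : 4 * (P - 1) * G <= 4 * (P - 1) * (4 * c * N * t).
  by apply: ler_wpM2l => //; lra.
have h4 : t * (P - 1) <= δ * N by nra.
have h5a : 16 * c * N * (t * (P - 1)) <= 16 * c * N * (δ * N).
  apply: ler_wpM2l => //; apply: mulr_ge0; [apply: mulr_ge0|]; lra.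
have h5 : N ^+ 2 <= 16 * c * N * (δ * N) by lra.
have h6 : 16 * c * δ <= 1/2 by nra.
nra.
Qed.

Lemma wt_sum_le (R : realType) (n : nat) (q : R) (F G : {ffun 'I_n -> bool} -> R) :
  0 <= q <= 1 -> (forall f, F f <= G f) ->
  \sum_f wt q f * F f <= \sum_f wt q f * G f.
Proof.
move=> hq H; apply: ler_sum => f _; apply: ler_wpM2l; [exact: wt_ge0|exact: H].
Qed.

Local Open Scope classical_set_scope.
Unset Implicit Arguments.

Theorem mainTheorem5 (R : realType) (c : R) : 0 < c ->
  exists delta : R, 0 < delta /\
  forall (d p n : nat) (B : 'I_n -> set 'rV[R]_d),
    (2 <= p)%N -> (1 <= n)%N ->
    (forall i, B i !=set0) ->
    hered_linear_delaunay c B ->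
    p2_property p B ->
    exists x : 'rV[R]_d, delta * n%:R / p%:R <= (#|dual_edge B x|%:R : R).
Proof.
move=> c0; set δ := (2 + 32 * c)^-1.
have d0 : 0 < δ by rewrite invr_gt0; lra.
exists δ; split => // d p n B p2 n1 Bne hd pp.
case: (pselect (exists x : 'rV[R]_d, δ * n%:R / p%:R <= (#|dual_edge B x|%:R : R))) => // Hno.
exfalso.
set N : R := n%:R; set P : R := p%:R; set t := δ * N / P.
have P2 : 2 <= P by rewrite /P (ler_nat R 2 p).
have P0 : 0 < P by lra.
have N1 : 1 <= N by rewrite /N (ler_nat R 1 n).
have tP : t * P = δ * N by rewrite /t mulfVK //; lra.
have Dt : forall x, #|dual_edge B x|%:R < t.
  move=> x; rewrite ltNge; apply/negP => h; apply: Hno; by exists x.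
have [x0 Bx0] := Bne (Ordinal n1).
have t1 : 1 < t.
  apply: le_lt_trans (Dt x0); rewrite (ler_nat R 1).
  rewrite card_gt0; apply/set0Pn; exists (Ordinal n1); rewrite /dual_edge inE.
  exact: mem_set.
case: (ltnP n (2 * p)) => Hn.
  have : N < 2 * P by rewrite /N /P -natrM ltr_nat.
  move=> hN.
  have dd : δ * (2 + 32 * c) = 1 by rewrite /δ mulVf //; lra.
  have h1 : P < t * P by rewrite -[X in X < _]mul1r ltr_pM2r.
  have h2 : δ * N < δ * (2 * P) by rewrite ltr_pM2l.
  have h3 : 0 < c * δ by apply: mulr_gt0.
  have h4 : P * 1 < P * (2 * δ) by lra.
  rewrite ltr_pM2l // in h4.
  lra.
set G : R := #|Ge B|%:R.
have NG : N ^+ 2 <= 4 * (P - 1) * G.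
  set r : R := 2 * (P - 1) / N.
  have N0 : 0 < N by lra.
  have r0 : 0 <= r by rewrite /r; apply: divr_ge0; lra.
  have rN : r * N = 2 * (P - 1) by rewrite /r mulfVK //; lra.
  have r1 : r <= 1.
    have : 2 * P <= N by rewrite /N /P -natrM ler_nat.
    nra.
  have hr : 0 <= r <= 1 by rewrite r0 r1.
  have L := wt_sum_le (F := fun f => #|Sf f|%:R)
     (G := fun f => #|ES B (Sf f)|%:R + (p.-1)%:R) hr.
  rewrite sum_wt_card in L.
  have : r * N <= r ^+ 2 * G + (P - 1).
    apply: (le_trans (L _)).
      by move=> f /=; rewrite -natrD ler_nat; apply: lin.
    under eq_bigr do rewrite mulrDr.
    rewrite big_split /= -mulr_suml sum_wt mul1r.
    have -> : (p.-1)%:R = P - 1 :> R.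
      by rewrite /P -[in X in _ = X - _](prednK (ltnW p2)) -natr1 addrK.
    apply: lerD => //.
    under eq_bigr do rewrite ES_sum.
    rewrite Wsum; last by move=> e _; apply: disj0.
    rewrite (eq_bigr (fun _ => r ^+ 2)); first by rewrite sumr_const /G mulr_natr.
    by move=> e; rewrite inE => /andP[/eqP -> _]; rewrite cards0 expr0 mulr1.
  rewrite rN => h.
  have h' : P - 1 <= r ^+ 2 * G by lra.
  have G0 : 0 <= G by [].
  have h2 : (P - 1) * N ^+ 2 <= r ^+ 2 * G * N ^+ 2.
    by apply: ler_wpM2r => //; apply: sqr_ge0.
  have e2 : r ^+ 2 * G * N ^+ 2 = (r * N) ^+ 2 * G.
    rewrite /r; field; lra.
  rewrite e2 rN in h2.
  have h3 : (P - 1) * N ^+ 2 <= (P - 1) * (4 * (P - 1) * G).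
    by apply: (le_trans h2); rewrite !expr2; lra.
  by rewrite ler_pM2l in h3; lra.
have GN : G <= 4 * c * N * t.
  set q : R := (2 * t)^-1.
  have q0 : 0 < q by rewrite /q invr_gt0; lra.
  have qt : q * t = 1/2 by rewrite /q; field; lra.
  have q1 : q <= 1 by nra.
  have hq : 0 <= q <= 1 by rewrite ltW.
  have hc : forall e : {set 'I_n}, exists x : 'rV[R]_d, e \in Ge B -> e \subset dual_edge B x.
    move=> e; case: (boolP (e \in Ge B)) => eG; last by exists 0.
    by move: (eG); rewrite inE => /andP[_ /asboolP [x ex]]; exists x.
  have [X HX] := boolp.choice hc.
  have U := wt_sum_le (F := fun f => #|delaunay_edges B (Sf f)|%:R)
     (G := fun f => c * #|Sf f|%:R) hq (fun f => del_upper (ltW c0) hd (Sf f)).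
  have EU : \sum_(f : {ffun 'I_n -> bool}) wt q f * (c * #|Sf f|%:R) = c * (q * N).
    by rewrite -(@sum_wt_card R n q) mulr_sumr; apply: eq_bigr => f _; rewrite mulrCA.
  rewrite EU in U.
  have Lo := wt_sum_le
     (F := fun f => \sum_(e in Ge B) ((e \subset Sf f) &&
              [disjoint Sf f & dual_edge B (X e) :\: e])%:R)
     (G := fun f => #|delaunay_edges B (Sf f)|%:R) hq
     (fun f => del_lower (Sf f) HX).
  rewrite Wsum in Lo; last first.
    by move=> e _; apply/pred0P => i /=; rewrite finset.in_setD; case: (i \in e).
  have Lo2 : G * (q ^+ 2 / 2) <= \sum_(e in Ge B) q ^+ #|e| * (1 - q) ^+ #|dual_edge B (X e) :\: e|.
    rewrite /G mulrC mulr_natr -sumr_const; apply: ler_sum => e; rewrite inE => /andP[/eqP -> _].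
    apply: ler_wpM2l; first exact: sqr_ge0.
    apply: le_trans (bern _ hq).
    have : #|dual_edge B (X e) :\: e|%:R <= #|dual_edge B (X e)|%:R :> R.
      by rewrite ler_nat subset_leq_card // finset.subDset finset.subsetUr.
    move: (Dt (X e)) => h1 h2.
    have : #|dual_edge B (X e) :\: e|%:R * q <= t * q by apply: ler_wpM2r; lra.
    lra.
  have : G * (q ^+ 2 / 2) <= c * (q * N) by lra.
  move=> h.
  have : G * q <= 2 * c * N.
    have h' : q * (G * q) <= q * (2 * c * N).
      have -> : q * (G * q) = 2 * (G * (q ^+ 2 / 2)) by rewrite expr2; field.
      lra.
    by rewrite ler_pM2l in h'.
  move=> h2.
  have : G * q * (2 * t) <= 2 * c * N * (2 * t) by apply: ler_wpM2r => //; lra.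
  have -> : G * q * (2 * t) = G by rewrite /q -mulrA mulVf ?mulr1 //; lra.
  lra.
by apply: (final_arith c0 (erefl δ) _ P2 tP NG GN); lra.
Qed.
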